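(* Let $\theta^{(1)},\ldots,\theta^{(M)}\in\mathbb{R}^D$ be an ensemble with empirical mean $\hat m=\frac1M\sum_i\theta^{(i)}$ and invertible empirical covariance $\hat\Sigma=\frac{1}{M-1}\sum_i(\theta^{(i)}-\hat m)(\theta^{(i)}-\hat m)^{\rm T}$, and let $\epsilon>0$. Define $$g_\epsilon(\theta,\theta')=\exp\Big(-\tfrac{1}{4\epsilon}(\theta-\theta')^{\rm T}\hat\Sigma^{-1}(\theta-\theta')\Big),\qquad k_\epsilon(\theta,\theta')=\frac{g_\epsilon(\theta,\theta')}{\sqrt{\sum_{i}g_\epsilon(\theta,\theta^{(i)})}\sqrt{\sum_i g_\epsilon(\theta',\theta^{(i)})}},$$ $n_\epsilon(\theta)=\sum_{i=1}^M k_\epsilon(\theta,\theta^{(i)})$, and the $M\times M$ Markov matrix ${\rm T}_{ij}=k_\epsilon(\theta^{(i)},\theta^{(j)})/n_\epsilon(\theta^{(i)})$. Let $\Psi_{\rm data}:\mathbb{R}^D\to\mathbb{R}$, let $\Delta\Psi^{(j)}_{\rm data}=\Psi_{\rm data}(\theta^{(j)})-\frac1M\sum_{k=1}^M\Psi_{\rm data}(\theta^{(k)})$, let $\tilde{\rm V}\in\mathbb{R}^M$ solve $\tilde{\rm V}={\rm T}\tilde{\rm V}+\epsilon\,\Delta\Psi_{\rm data}$, set $r_j=\tilde{\rm V}^{(j)}+\epsilon\,\Delta\Psi^{(j)}_{\rm data}$, and define $$\tilde V(\theta)=\frac{1}{n_\epsilon(\theta)}\sum_{j=1}^M k_\epsilon(\theta,\theta^{(j)})\,r_j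 .$$ Then for each $i=1,\ldots,M$, $$\hat\Sigma\,\nabla_\theta\tilde V(\theta^{(i)})=\sum_{j=1}^M s_{ij}\,\theta^{(j)},\qquad s_{ij}=\frac{1}{2\epsilon}{\rm T}_{ij}\Big(r_j-\sum_{k=1}^M{\rm T}_{ik}r_k\Big).$$ *)

(* Defs.v *)
From HB Require Import structures.
From mathcomp Require Import all_boot all_order all_algebra.
From mathcomp Require Import all_classical all_reals all_analysis.
Set Implicit Arguments. Unset Strict Implicit. Unset Printing Implicit Defensive.
Import Order.TTheory GRing.Theory Num.Theory.
Import numFieldNormedType.Exports.
Local Open Scope ring_scope.

Section Kernel.
Variables (R : realType) (M D : nat) (th : 'I_M -> 'rV[R]_D).

Definition emp_mean : 'rV[R]_D := (M%:R)^-1 *: \sum_(i < M) th i.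

(* empirical covariance  1/(M-1) sum_i (th_i - m)(th_i - m)^T  (a D x D matrix;
   with row vectors, (th_i - m)^T *m (th_i - m) is the outer product) *)
Definition emp_cov : 'M[R]_D :=
  ((M - 1)%:R)^-1 *: \sum_(i < M) ((th i - emp_mean)^T *m (th i - emp_mean)).

Variable eps : R.

Definition mahal (x y : 'rV[R]_D) : R :=
  ((x - y) *m invmx emp_cov *m (x - y)^T) 0 0.

Definition g_eps (x y : 'rV[R]_D) : R := expR (- ((4 * eps)^-1 * mahal x y)).

Definition k_eps (x y : 'rV[R]_D) : R :=
  g_eps x y / (Num.sqrt (\sum_(i < M) g_eps x (th i)) *
               Num.sqrt (\sum_(i < M) g_eps y (th i))).

Definition n_eps (x : 'rV[R]_D) : R := \sum_(i < M) k_eps x (th i).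

Definition Tmat (i j : 'I_M) : R := k_eps (th i) (th j) / n_eps (th i).

Definition dPsi (Psi : 'rV[R]_D -> R) (j : 'I_M) : R :=
  Psi (th j) - (M%:R)^-1 * \sum_(k < M) Psi (th k).

Definition Vtilde (r : 'I_M -> R) (x : 'rV[R]_D) : R :=
  (n_eps x)^-1 * \sum_(j < M) k_eps x (th j) * r j.

Definition s_coef (r : 'I_M -> R) (i j : 'I_M) : R :=
  (2 * eps)^-1 * Tmat i j * (r j - \sum_(k < M) Tmat i k * r k).

End Kernel.

Definition gradient (R : realType) (D : nat) (f : 'rV[R]_D -> R) (x : 'rV[R]_D)
  : 'rV[R]_D := \row_(k < D) ('D_(delta_mx 0 k) f x).

(* Main.v *)
Require Import Defs.
From HB Require Import structures.
From mathcomp Require Import all_boot all_order all_algebra.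
From mathcomp Require Import all_classical all_reals all_analysis.
From mathcomp Require Import ring lra.
Import Order.TTheory GRing.Theory Num.Theory.
Import numFieldNormedType.Exports.
Local Open Scope ring_scope.

Section Helpers.
Variables (R : realType) (V : normedModType R).
Implicit Types (f g : V -> R) (x v : V).

Lemma dfM f g x : differentiable f x -> differentiable g x ->
  differentiable (fun y => f y * g y) x.
Proof. move=> df dg; exact: (differentiableM df dg). Qed.

Lemma dfB f g x : differentiable f x -> differentiable g x ->
  differentiable (fun y => f y - g y) x.
Proof. move=> df dg; exact: (differentiableB df dg). Qed.

Lemma dfC (c : R) x : differentiable (fun _ : V => c) x.
Proof. exact: differentiable_cst. Qed.

Lemma dfS n (f : 'I_n -> V -> R) x : (forall i, differentiable (f i) x) ->
  differentiable (fun y => \sum_(i < n) f i y) x.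
Proof. move=> h; rewrite -fct_sumE; exact: differentiable_sum. Qed.

Lemma dfV f x : differentiable f x -> f x != 0 ->
  differentiable (fun y => (f y)^-1) x.
Proof. move=> df h; exact: differentiableV. Qed.

Lemma dfE f x : differentiable f x -> differentiable (fun y => expR (f y)) x.
Proof.
move=> df; apply: (differentiable_comp df).
exact/derivable1_diffP/derivable_expR.
Qed.

Lemma idM f g x v df dg : is_derive x v f df -> is_derive x v g dg ->
  is_derive x v (fun y => f y * g y) (f x * dg + g x * df).
Proof. move=> h1 h2; exact: (is_deriveM h1 h2). Qed.

Lemma idB f g x v df dg : is_derive x v f df -> is_derive x v g dg ->
  is_derive x v (fun y => f y - g y) (df - dg).
Proof. move=> h1 h2; exact: (is_deriveB h1 h2). Qed.

Lemma idC (c : R) x v : is_derive x v (fun _ : V => c) 0.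
Proof. exact: is_derive_cst. Qed.

Lemma idS n (f : 'I_n -> V -> R) x v df : (forall i, is_derive x v (f i) (df i)) ->
  is_derive x v (fun y => \sum_(i < n) f i y) (\sum_(i < n) df i).
Proof. move=> h; rewrite -fct_sumE; exact: is_derive_sum. Qed.

Lemma idV f x v df : f x != 0 -> is_derive x v f df ->
  is_derive x v (fun y => (f y)^-1) (- (f x) ^- 2 * df).
Proof.
move=> h1 h2; apply: DeriveDef; first exact: derivableV.
by rewrite deriveV // derive_val.
Qed.

Lemma idE f x v df : differentiable f x -> is_derive x v f df ->
  is_derive x v (fun y => expR (f y)) (expR (f x) * df).
Proof.
move=> df' h.
have dE : differentiable expR (f x) by exact/derivable1_diffP/derivable_expR.
have dc : differentiable (expR \o f) x := differentiable_comp df' dE.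
apply: DeriveDef; first exact: diff_derivable.
rewrite (deriveE _ dc) (diff_comp df' dE) /= diff1E // derive1E.
have -> : 'D_1 expR (f x) = expR (f x) :> R by exact: derive_val.
by rewrite -deriveE // derive_val mulrC.
Qed.
End Helpers.

Section Coord.
Variables (R : realType) (D : nat).
Lemma dfcoord (a : 'I_D) (x : 'rV[R]_D) : differentiable (fun y : 'rV[R]_D => y 0 a) x.
Proof. exact: differentiable_coord. Qed.
Lemma idcoord (a : 'I_D) (x v : 'rV[R]_D) : is_derive x v (fun y : 'rV[R]_D => y 0 a) (v 0 a).
Proof.
apply: DeriveDef.
  exact: ((derivable_mxP (@id 'rV[R]_D) x v).1 (@derivable_id _ _ x v) 0 a).
have := derive_mx (@derivable_id _ _ x v); rewrite derive_id => /matrixP /(_ 0 a).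
by rewrite mxE => <-.
Qed.
End Coord.
Section Quad.
Variables (R : realType) (D : nat) (A : 'M[R]_D).

Definition qf (y x : 'rV[R]_D) : R := ((x - y) *m A *m (x - y)^T) 0 0.

Lemma qf_sum y x : qf y x =
  \sum_(b < D) (\sum_(a < D) (x 0 a - y 0 a) * A a b) * (x 0 b - y 0 b).
Proof.
rewrite /qf mxE; apply: eq_bigr => b _; rewrite !mxE; congr (_ * _).
by apply: eq_bigr => a _; rewrite !mxE.
Qed.

Lemma qf_diff y x : differentiable (qf y) x.
Proof.
rewrite (_ : qf y = fun x => \sum_(b < D) (\sum_(a < D) (x 0 a - y 0 a) * A a b)
   * (x 0 b - y 0 b)); last by apply/funext => z; rewrite qf_sum.
apply: dfS => b; apply: dfM; last by apply: dfB; [exact: dfcoord|exact: dfC].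
apply: dfS => a; apply: dfM; last exact: dfC.
by apply: dfB; [exact: dfcoord|exact: dfC].
Qed.

Lemma qf_derive y x v : A^T = A ->
  is_derive x v (qf y) (2 * ((x - y) *m A *m v^T) 0 0).
Proof.
move=> sA.
rewrite (_ : qf y = fun x => \sum_(b < D) (\sum_(a < D) (x 0 a - y 0 a) * A a b)
   * (x 0 b - y 0 b)); last by apply/funext => z; rewrite qf_sum.
apply: is_derive_eq.
  apply: idS => b; apply: idM; [|by apply: idB; try exact: idcoord; try exact: idC].
  apply: idS => a; apply: idM; try exact: idC.
  by apply: idB; try exact: idcoord; try exact: idC.
rewrite mxE mulr2n mulrDl !mul1r big_split /=; congr (_ + _).
  apply: eq_bigr => b _; rewrite subr0 !mxE; congr (_ * _).
  by apply: eq_bigr => a _; rewrite !mxE.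
under eq_bigr do rewrite mulr_sumr.
rewrite exchange_big /=; apply: eq_bigr => a _; rewrite !mxE mulr_suml.
apply: eq_bigr => b _; rewrite !mxE subr0 mulr0 add0r.
have -> : A b a = A a b by rewrite -[in LHS]sA mxE.
by rewrite mulrA.
Qed.
End Quad.
Arguments qf {R D}. Arguments qf_diff {R D}. Arguments qf_derive {R D}. Arguments qf_sum {R D}.
Section Main.
Variables (R : realType) (M D : nat) (th : 'I_M -> 'rV[R]_D) (eps : R) (r : 'I_M -> R).
Variable (i0 : 'I_M).
Hypotheses (hU : emp_cov th \in unitmx) (heps : 0 < eps).

Lemma sS : (emp_cov th)^T = emp_cov th.
Proof.
rewrite /emp_cov linearZ /= raddf_sum; congr (_ *: _); apply: eq_bigr => j _.
by rewrite /= trmx_mul trmxK.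
Qed.

Let A := invmx (emp_cov th).
Lemma sA : A^T = A.
Proof. by rewrite /A trmx_inv sS. Qed.

Let k0 := - (4 * eps)^-1.
Let e j (x : 'rV[R]_D) := expR (k0 * qf A (th j) x).
Lemma eE j x : g_eps th eps x (th j) = e j x.
Proof. by rewrite /g_eps /e /k0 mulNr. Qed.
Lemma e_gt0 j x : 0 < e j x.
Proof. exact: expR_gt0. Qed.

Let S x := \sum_(l < M) e l x.
Lemma S_gt0 x : 0 < S x.
Proof.
rewrite /S (bigD1 i0) //=; apply: (lt_le_trans (e_gt0 i0 x)).
by rewrite lerDl sumr_ge0 // => l _; apply/ltW/e_gt0.
Qed.
Let c j := (Num.sqrt (S (th j)))^-1.
Lemma c_gt0 j : 0 < c j.
Proof. by rewrite /c invr_gt0 sqrtr_gt0 S_gt0. Qed.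
Let W x := \sum_(j < M) c j * e j x.
Let N x := \sum_(j < M) c j * e j x * r j.
Lemma W_gt0 x : 0 < W x.
Proof.
rewrite /W (bigD1 i0) //=; apply: (lt_le_trans (mulr_gt0 (c_gt0 i0) (e_gt0 i0 x))).
by rewrite lerDl sumr_ge0 // => l _; apply/ltW/mulr_gt0; [apply: c_gt0|apply: e_gt0].
Qed.

Lemma kE x j : k_eps th eps x (th j) = (Num.sqrt (S x))^-1 * (c j * e j x).
Proof.
rewrite /k_eps eE.
have -> : \sum_(i < M) g_eps th eps x (th i) = S x by apply: eq_bigr => l _; rewrite eE.
have -> : \sum_(i < M) g_eps th eps (th j) (th i) = S (th j) by apply: eq_bigr => l _; rewrite eE.
by rewrite /c invfM mulrC mulrA.
Qed.

Lemma VtE : Vtilde th eps r = fun x => N x * (W x)^-1.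
Proof.
apply/funext => x; rewrite /Vtilde /n_eps.
under eq_bigr do rewrite kE.
under [X in _ * X]eq_bigr do rewrite kE.
rewrite -mulr_sumr -/(W x) (_ : \sum_(j < M) _ = (Num.sqrt (S x))^-1 * N x); last first.
  by rewrite /N mulr_sumr; apply: eq_bigr => j _; rewrite !mulrA.
have s0 : Num.sqrt (S x) != 0 by rewrite gt_eqF // sqrtr_gt0 S_gt0.
have w0 : W x != 0 by rewrite gt_eqF // W_gt0.
by field; rewrite s0 w0.
Qed.

Lemma TE i j : Tmat th eps i j = c j * e j (th i) / W (th i).
Proof.
rewrite /Tmat /n_eps kE; under eq_bigr do rewrite kE.
rewrite -mulr_sumr -/(W (th i)).
have s0 : Num.sqrt (S (th i)) != 0 by rewrite gt_eqF // sqrtr_gt0 S_gt0.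
have w0 : W (th i) != 0 by rewrite gt_eqF // W_gt0.
by field; rewrite s0 w0.
Qed.


Lemma e_diff j x : differentiable (e j) x.
Proof. apply: dfE; apply: dfM; [exact: dfC | exact: qf_diff]. Qed.

Lemma e_der j x v :
  is_derive x v (e j) (e j x * (k0 * (2 * ((x - th j) *m A *m v^T) 0 0))).
Proof.
apply: is_derive_eq.
  apply: idE; first by apply: dfM; [exact: dfC | exact: qf_diff].
  apply: idM; try exact: idC; exact: (qf_derive A (th j) x v sA).
by rewrite /e mulr0 addr0.
Qed.

Lemma W_neq0 x : W x != 0.
Proof. by rewrite gt_eqF // W_gt0. Qed.

Lemma F_diff x : differentiable (fun y => N y * (W y)^-1) x.
Proof.
apply: dfM.
  apply: dfS => j; apply: dfM; last exact: dfC.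
  by apply: dfM; [exact: dfC | exact: e_diff].
apply: dfV; last exact: W_neq0.
by apply: dfS => j; apply: dfM; [exact: dfC | exact: e_diff].
Qed.

Lemma F_der x v : is_derive x v (fun y => N y * (W y)^-1)
  (\sum_(j < M) (2 * k0 * (c j * e j x / W x) * (r j - N x / W x))
      * ((x - th j) *m A *m v^T) 0 0).
Proof.
apply: is_derive_eq.
  apply: idM.
    apply: idS => j; apply: idM; try exact: idC.
    by apply: idM; try exact: idC; exact: e_der.
  apply: idV; first exact: W_neq0.
  by apply: idS => j; apply: idM; try exact: idC; exact: e_der.
have w0 := W_neq0 x.
rewrite /= !mulr_sumr -big_split /=; apply: eq_bigr => j _.
move: w0; set w := W x; set n := N x => w0.
by field.
Qed.


Lemma main_i i : differentiable (Vtilde th eps r) (th i) /\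
  (emp_cov th *m (gradient (Vtilde th eps r) (th i))^T)^T
      = \sum_(j < M) s_coef th eps r i j *: th j.
Proof.
rewrite VtE; split; first exact: F_diff.
have w0 := W_neq0 (th i).
set x := th i.
pose p j := c j * e j x / W x.
pose V0 := N x / W x.
have hsum : \sum_(j < M) p j = 1.
  by rewrite /p -mulr_suml -/(W x) divff.
have hNV : \sum_(j < M) p j * r j = V0.
  by rewrite /V0 /N mulr_suml; apply: eq_bigr => j _; rewrite /p mulrAC.
have hT : forall j, Tmat th eps i j = p j by move=> j; rewrite TE.
have grad : gradient (fun y => N y * (W y)^-1) x =
    \sum_(j < M) (2 * k0 * p j * (r j - V0)) *: ((x - th j) *m A).
  apply/rowP => k; rewrite /gradient mxE (@derive_val _ _ _ _ _ _ _ (F_der x (delta_mx 0 k))).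
  rewrite summxE; apply: eq_bigr => j _; rewrite [RHS]mxE; congr (_ * _).
  by rewrite trmx_delta -colE mxE.
rewrite grad trmx_mul trmxK sS mulmx_suml.
under eq_bigr do rewrite -scalemxAl -mulmxA mulVmx // mulmx1 scalerBr.
rewrite sumrB -scaler_suml.
have -> : \sum_(j < M) 2 * k0 * p j * (r j - V0) = 0.
  transitivity (2 * k0 * (\sum_(j < M) p j * r j) - 2 * k0 * V0 * \sum_(j < M) p j).
    by rewrite !mulr_sumr -sumrB; apply: eq_bigr => j _; ring.
  by rewrite hsum hNV; ring.
rewrite scale0r add0r -sumrN; apply: eq_bigr => j _.
rewrite -scaleNr /s_coef hT; congr (_ *: _).
under eq_bigr do rewrite hT.
rewrite hNV /k0.
have e0 : eps != 0 by rewrite gt_eqF.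
by field.
Qed.

End Main.

Theorem mainTheorem2 (R : realType) (M D : nat) (th : 'I_M -> 'rV[R]_D)
  (eps : R) (Psi : 'rV[R]_D -> R) (Vt : 'I_M -> R) :
  emp_cov th \in unitmx ->
  0 < eps ->
  (forall i : 'I_M,
     Vt i = \sum_(j < M) Tmat th eps i j * Vt j + eps * dPsi th Psi i) ->
  let r := fun j : 'I_M => Vt j + eps * dPsi th Psi j in
  forall i : 'I_M,
    differentiable (Vtilde th eps r) (th i) /\
    (emp_cov th *m (gradient (Vtilde th eps r) (th i))^T)^T
      = \sum_(j < M) s_coef th eps r i j *: th j.
Proof.
move=> hU heps _ r i.
exact: (@main_i R M D th eps r i hU heps i).
Qed.
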